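(* Let $q=3^m$ with $m\ge1$ and $f(x)=x^{q+2}$ on $\mathbb{F}_{q^2}$. Then $W_f(a,b)\in\{-q,0,q,2q\}$ for all $a\in\mathbb{F}_{q^2}$ and $b\in\mathbb{F}_{q^2}^*$.
   Context: The Walsh transform is $W_f(a,b)=\sum_{x\in\mathbb{F}_{q^2}}\xi_3^{\mathrm{Tr}_{\mathbb{F}_{q^2}/\mathbb{F}_3}(bf(x)-ax)}$ with $\xi_3=e^{2\pi i/3}$ and $\mathrm{Tr}_{\mathbb{F}_{q^2}/\mathbb{F}_3}$ the absolute trace. *)

(* Defs.v *)
From mathcomp Require Import all_boot all_order all_algebra all_field.
Set Implicit Arguments. Unset Strict Implicit. Unset Printing Implicit Defensive.
Import Order.TTheory GRing.Theory Num.Theory.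
Local Open Scope ring_scope.

Definition xi3 : algC := (-1 + 'i * sqrtC 3) / 2.

(* Absolute trace of F_{3^n} over F_3 (with #|F| = 3^n): sum_{i<n} x^(3^i).
   Its values lie in the prime subfield {0, 1, 2}. *)
Definition abs_trace (F : finFieldType) (n : nat) (x : F) : F :=
  \sum_(i < n) x ^+ (3 ^ i).

(* xi_3 ^ t for t in the prime field F_3 ⊆ F (char 3): t = k%:R with k in {0,1,2}. *)
Definition xi3_pow (F : finFieldType) (t : F) : algC :=
  if [pick k : 'I_3 | t == (k : nat)%:R] is Some k then xi3 ^+ k else 0.

(* Walsh transform on F = F_{q^2}, q = 3^m (so #|F| = 3^(2m)). *)
Definition walsh (F : finFieldType) (m : nat) (f : F -> F) (a b : F) : algC :=
  \sum_(x : F) xi3_pow (abs_trace (2 * m) (b * f x - a * x)).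

(* Main.v *)
Require Import Defs.
From mathcomp Require Import all_boot all_order all_algebra all_field.
From mathcomp Require Import zify ring.
Import GRing.Theory Num.Theory.
Local Open Scope ring_scope.
Set Implicit Arguments. Unset Strict Implicit.

Lemma xi3_rel : xi3 ^+ 2 + xi3 + 1 = 0.
Proof.
rewrite /xi3.
have h1 : 'i ^+ 2 = -1 :> algC by exact: sqrCi.
have h2 : sqrtC 3 ^+ 2 = 3 :> algC by exact: sqrtCK.
have e : (-1 + 'i * sqrtC 3) ^+ 2 = -2 - 2 * 'i * sqrtC 3 :> algC.
  rewrite sqrrD exprMn h1 h2; ring.
rewrite expr_div_n e.
have n2 : (2 : algC) != 0 by rewrite pnatr_eq0.
field; first by [].
Qed.

Lemma xi3_3 : xi3 ^+ 3 = 1.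
Proof.
apply/eqP; rewrite -subr_eq0.
have -> : xi3 ^+ 3 - 1 = (xi3 - 1) * (xi3 ^+ 2 + xi3 + 1) by ring.
by rewrite xi3_rel mulr0.
Qed.

Lemma xi3_neq1 : xi3 != 1.
Proof.
apply/eqP => e; have := xi3_rel; rewrite e expr1n.
move/eqP; rewrite (_ : 1 + 1 + 1 = 3%:R :> algC) ?pnatr_eq0 //.
by ring.
Qed.

Lemma xi3_2_neq1 : xi3 ^+ 2 != 1.
Proof.
apply/eqP => e; have := xi3_rel; rewrite e => h.
have hx : xi3 = -2 by apply/eqP; rewrite -subr_eq0 -h; apply/eqP; ring.
move: e; rewrite hx => /eqP; rewrite sqrrN -subr_eq0.
rewrite (_ : 2 ^+ 2 - 1 = 3%:R :> algC) ?pnatr_eq0 //.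
by ring.
Qed.
Section S.
Variable F : finFieldType.
Hypothesis ch : (3%N \in [pchar F]).

Lemma three0 : (3%:R : F) = 0.
Proof. by apply/eqP; rewrite -(dvdn_pcharf ch). Qed.

Lemma two_neq0 : (2%:R : F) != 0.
Proof. by rewrite -(dvdn_pcharf ch). Qed.

Lemma frobD (x y : F) i : (x + y) ^+ (3 ^ i) = x ^+ (3 ^ i) + y ^+ (3 ^ i).
Proof.
elim: i => [|i IH]; first by rewrite !expr1.
by rewrite !expnSr !exprM IH -!(pFrobenius_autE ch) rmorphD.
Qed.

Lemma frobN (x : F) i : (- x) ^+ (3 ^ i) = - x ^+ (3 ^ i).
Proof. by apply/eqP; rewrite -subr_eq0 opprK -frobD addNr expr0n expn_eq0. Qed.

Lemma frobB (x y : F) i : (x - y) ^+ (3 ^ i) = x ^+ (3 ^ i) - y ^+ (3 ^ i).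
Proof. by rewrite frobD frobN. Qed.

Lemma frob_sum (I : finType) (P : pred I) (G : I -> F) i :
  (\sum_(j | P j) G j) ^+ (3 ^ i) = \sum_(j | P j) G j ^+ (3 ^ i).
Proof.
elim/big_rec2: _ => [|j a b _ <-]; first by rewrite expr0n expn_eq0.
by rewrite frobD.
Qed.

Lemma prime_field (t : F) : t ^+ 3 = t -> exists k : 'I_3, t = (k : nat)%:R.
Proof.
move=> h.
have e : t * (t - 1) * (t - 2%:R) = 0.
  have -> : t * (t - 1) * (t - 2%:R) = t ^+ 3 - t - 3%:R * t * (t - 1).
    by ring.
  by rewrite three0 mul0r mul0r subr0 h subrr.
move/eqP: e; rewrite !mulf_eq0 !subr_eq0 => /orP[/orP[]|] /eqP ->.
- by exists (@Ordinal 3 0 isT).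
- by exists (@Ordinal 3 1 isT).
- by exists (@Ordinal 3 2 isT).
Qed.

Lemma natF_mod3 n : (n%:R : F) = (n %% 3)%:R.
Proof.
by rewrite {1}(divn_eq n 3) natrD natrM three0 mulr0 add0r.
Qed.

Lemma natF_inj (i j : 'I_3) : ((i : nat)%:R : F) = (j : nat)%:R -> i = j.
Proof.
wlog le : i j / (i <= j)%N.
  move=> W e; case: (leqP i j) => h; first exact: W.
  by apply/esym/W => //; apply: ltnW.
move=> /esym/eqP; rewrite -subr_eq0 -natrB // -(dvdn_pcharf ch) => d.
apply/val_inj/eqP; rewrite eqn_leq le /=.
case: i j le d => [[|[|[|?]]] ?] [[|[|[|?]]] ?] //=.
Qed.

Lemma xi3_pow_nat n : xi3_pow (n%:R : F) = xi3 ^+ n.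
Proof.
rewrite natF_mod3 /xi3_pow -(expr_mod n xi3_3).
case: pickP => [k /eqP hk | /(_ (Ordinal (ltn_pmod n (isT : (0 < 3)%N))))].
  by rewrite (natF_inj (j := Ordinal (ltn_pmod n (isT : (0 < 3)%N))) (esym hk)).
by rewrite eqxx.
Qed.

End S.

Section T.
Variable F : finFieldType.
Variable m : nat.
Hypothesis hm : (1 <= m)%N.
Hypothesis hF : #|F| = ((3 ^ m) ^ 2)%N.

Lemma chF : (3%N \in [pchar F]).
Proof. by apply: (card_finPcharP (n := (m * 2)%N)) => //; rewrite hF expnM. Qed.

Local Notation Tr := (@abs_trace F (2 * m)).
Local Notation q := (3 ^ m)%N.

Lemma expq2 (x : F) : x ^+ (3 ^ (2 * m)) = x.
Proof. by rewrite mulnC expnM -hF expf_card. Qed.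

Lemma expqq (x : F) : (x ^+ q) ^+ q = x.
Proof. by rewrite -exprM -expnD addnn -mul2n expq2. Qed.

Lemma TrD (x y : F) : Tr (x + y) = Tr x + Tr y.
Proof. by rewrite /abs_trace -big_split; apply: eq_bigr => i _; rewrite (frobD chF). Qed.

Lemma TrN (x : F) : Tr (- x) = - Tr x.
Proof. by rewrite /abs_trace -sumrN; apply: eq_bigr => i _; rewrite (frobN chF). Qed.

Lemma Tr0 : Tr 0 = 0.
Proof. by apply: (addrI (Tr 0)); rewrite addr0 -TrD addr0. Qed.

Lemma Tr3 (x : F) : Tr (x ^+ 3) = Tr x.
Proof.
rewrite /abs_trace.
have [n' hn] : exists n', (2 * m)%N = n'.+1 by exists (2 * m).-1; lia.
rewrite hn big_ord_recr big_ord_recl /= -exprM -expnS -hn expq2 addrC expn0 expr1.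
by congr (_ + _); apply: eq_bigr => i _; rewrite -exprM -expnS.
Qed.

Lemma Trk (x : F) k : Tr (x ^+ (3 ^ k)) = Tr x.
Proof.
elim: k => [|k IH]; first by rewrite expr1.
by rewrite expnSr exprM Tr3.
Qed.

Lemma Trq (x : F) : Tr (x ^+ q) = Tr x.
Proof. exact: Trk. Qed.

Lemma Tr_cube (x : F) : Tr x ^+ 3 = Tr x.
Proof.
rewrite -{2}Tr3 /abs_trace (frob_sum chF _ _ 1) expn1.
by apply: eq_bigr => i _; rewrite -!exprM mulnC.
Qed.

Definition psi (x : F) : algC := xi3_pow (Tr x).

Lemma psi_nat (x : F) : exists k : 'I_3, Tr x = (k : nat)%:R /\ psi x = xi3 ^+ k.
Proof.
have [k hk] := prime_field chF (Tr_cube x).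
by exists k; split => //; rewrite /psi hk (xi3_pow_nat chF).
Qed.

Lemma psiD (x y : F) : psi (x + y) = psi x * psi y.
Proof.
have [i [hi ->]] := psi_nat x; have [j [hj ->]] := psi_nat y.
by rewrite /psi TrD hi hj -natrD (xi3_pow_nat chF) exprD.
Qed.

Lemma psi0 : psi 0 = 1.
Proof. by rewrite /psi Tr0 -(mulr0n (1 : F)) (xi3_pow_nat chF). Qed.

Lemma psi_neq1 (x : F) : Tr x != 0 -> psi x != 1.
Proof.
have [k [hk ->]] := psi_nat x; rewrite hk.
case: k {hk} => [[|[|[|?]]] ?] //=; first by rewrite eqxx.
- by rewrite expr1 xi3_neq1.
- by rewrite xi3_2_neq1.
Qed.


Definition Hq (x : F) := x ^+ q == x.
Definition Kq (x : F) := x ^+ q == - x.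

Lemma frobqD (x y : F) : (x + y) ^+ q = x ^+ q + y ^+ q.
Proof. exact: (frobD chF). Qed.
Lemma frobqN (x : F) : (- x) ^+ q = - x ^+ q.
Proof. exact: (frobN chF). Qed.

Lemma Tr_K k : Kq k -> Tr k = 0.
Proof.
move=> /eqP hk; have : Tr k = - Tr k by rewrite -TrN -hk Trq.
move/eqP; rewrite -subr_eq0 opprK -mulr2n -mulr_natl mulf_eq0.
by rewrite (negbTE (two_neq0 chF)) /= => /eqP.
Qed.

Lemma card_sum1 (P : pred F) : \sum_(u | P u) (1 : algC) = (#|P|)%:R.
Proof. by rewrite -sum1_card natr_sum. Qed.

Lemma nonroot (p : {poly F}) : p != 0 -> (size p <= #|F|)%N -> exists z, ~~ root p z.
Proof.
move=> p0 sz; apply/existsP; apply: contraTT sz; rewrite negb_exists => /forallP h.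
rewrite -ltnNge cardE; apply: max_poly_roots => //; last exact: enum_uniq.
by apply/allP => z _; have := h z; rewrite negbK.
Qed.

Lemma Tr_ex : exists z, Tr z != 0.
Proof.
pose p : {poly F} := \sum_(i < 2 * m) 'X^(3 ^ i).
have [n' hn] : exists n', (2 * m)%N = n'.+1 by exists (2 * m).-1; lia.
have hp : p != 0.
  apply/eqP => e; have : p`_1 = 0 by rewrite e coef0.
  rewrite /p coef_sum hn big_ord_recl /= coefXn eqxx big1 ?addr0; first by move/eqP; rewrite oner_eq0.
  move=> i _; rewrite coefXn.
  have h3 : (1 < 3 ^ (bump 0 i))%N by rewrite -{1}(expn0 3) ltn_exp2l.
  by rewrite (ltn_eqF h3).
have [z hz] : exists z, ~~ root p z.
  apply: nonroot => //; rewrite /p; apply: (leq_trans (size_sum _ _ _)).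
  apply/bigmax_leqP => i _; rewrite size_polyXn hF -expnM ltn_exp2l //.
  by have := ltn_ord i; lia.
by exists z; move: hz; rewrite /root /p horner_sum; under eq_bigr do rewrite hornerXn.
Qed.

Lemma q_gt1 : (1 < q)%N.
Proof. by rewrite -{1}(expn0 3) ltn_exp2l. Qed.

Lemma notH_ex : exists z, ~~ Hq z.
Proof.
pose p : {poly F} := 'X^q - 'X.
have sp : size p = q.+1.
  by rewrite /p size_polyDl size_polyXn // size_polyN size_polyX ltnS q_gt1.
have hp : p != 0 by rewrite -size_poly_eq0 sp.
have [z hz] : exists z, ~~ root p z.
  apply: nonroot => //; rewrite sp hF.
  have := q_gt1; move: q => n; nia.
by exists z; move: hz; rewrite /root /p /Hq !hornerE subr_eq0.
Qed.

Lemma decomp (R : nmodType) (G : F -> R) :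
  \sum_u G u = \sum_(k | Kq k) \sum_(s | Hq s) G (s + k).
Proof.
rewrite (partition_big (fun u => u ^+ q - u) Kq) /=; last first.
  move=> u _; rewrite /Kq frobqD frobqN expqq opprB.
  by rewrite addrC.
apply: eq_bigr => k hk.
rewrite (reindex_onto (fun s => s + k) (fun u => u - k)) /=; last by move=> u _; rewrite subrK.
apply: eq_bigl => s; rewrite addrK eqxx andbT /Hq.
rewrite frobqD (eqP hk) -subr_eq0 -[X in _ = X]subr_eq0.
have -> : s ^+ q + - k - (s + k) - k = s ^+ q - s - 3%:R * k by ring.
by rewrite (three0 chF) mul0r subr0.
Qed.


Lemma frobqM (x y : F) : (x * y) ^+ q = x ^+ q * y ^+ q.
Proof. exact: exprMn. Qed.

Lemma orthK l : Kq l -> \sum_(s | Hq s) psi (s * l) = (#|Hq|)%:R.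
Proof.
move=> hl; rewrite -card_sum1; apply: eq_bigr => s hs.
rewrite /psi Tr_K ?psi0 //.
- by rewrite -(mulr0n (1 : F)) (xi3_pow_nat chF).
- by rewrite /Kq frobqM (eqP hs) (eqP hl) mulrN.
Qed.

Lemma orthN l : ~~ Kq l -> \sum_(s | Hq s) psi (s * l) = 0.
Proof.
move=> hl.
pose mu := l + l ^+ q.
have mu0 : mu != 0 by apply: contra hl; rewrite /mu /Kq addrC addr_eq0.
have Hmu : mu ^+ q = mu by rewrite /mu frobqD expqq addrC.
have [z hz] := Tr_ex.
pose h := - (z + z ^+ q).
have Hh : h ^+ q = h by rewrite /h frobqN frobqD expqq addrC.
have Trh : Tr h = Tr z.
  have -> : z = h + (z ^+ q - z).
    rewrite /h; apply/eqP; rewrite -subr_eq0; apply/eqP.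
    have -> : z - (- (z + z ^+ q) + (z ^+ q - z)) = 3%:R * z by ring.
    by rewrite (three0 chF) mul0r.
  rewrite TrD (@Tr_K (z ^+ q - z)) ?addr0 //.
  by rewrite /Kq frobqD frobqN expqq opprB.
pose s0 := h / mu.
have Hs0 : Hq s0 by rewrite /Hq frobqM exprVn Hh Hmu.
have Trs0 : Tr (s0 * l) != 0.
  have e : Tr h = Tr (s0 * l) + Tr (s0 * l).
    rewrite -{2}(Trq (s0 * l)) -TrD frobqM (eqP Hs0) -mulrDr.
    by rewrite /s0 -/mu divfK.
  apply: contra_neq hz => e0; by rewrite -Trh e e0 addr0.
set S := \sum_(s | Hq s) _.
have eS : S = S * psi (s0 * l).
  rewrite {1}/S (reindex_inj (addIr s0)) /= /S mulr_suml.
  apply: eq_big => s.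
    by rewrite /Hq frobqD (eqP Hs0) (inj_eq (addIr s0)).
  by move=> _; rewrite mulrDl psiD.
have : S * (1 - psi (s0 * l)) = 0 by rewrite mulrBr mulr1 -eS subrr.
move/eqP; rewrite mulf_eq0 subr_eq0 (eq_sym 1) (negbTE (psi_neq1 Trs0)) orbF.
by move/eqP.
Qed.

Lemma cardH : #|Hq| = q.
Proof.
have [z hz] := notH_ex.
pose t := z ^+ q - z.
have t0 : t != 0 by rewrite /t subr_eq0.
have Kt : t ^+ q = - t by rewrite /t frobqD frobqN expqq opprB.
have cKH : #|Kq| = #|Hq|.
  apply/eqP; rewrite -(eqr_nat algC) -!card_sum1.
  rewrite (reindex_onto (fun s => t * s) (fun k => k / t)) /=; last first.
    by move=> k _; rewrite mulrC divfK.
  apply/eqP/eq_bigl => s; rewrite mulrC mulfK // eqxx andbT /Kq /Hq.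
  by rewrite frobqM Kt mulrN (inj_eq (@oppr_inj _)) (inj_eq (mulIf t0)).
have cF : #|F| = (#|Kq| * #|Hq|)%N.
  have e1 : #|F| = #|[pred u : F | true]| by apply: eq_card.
  apply/eqP; rewrite e1 -(eqr_nat algC) natrM -!card_sum1.
  rewrite [X in X == _](eq_bigl xpredT) //.
  rewrite decomp mulr_suml; apply/eqP/eq_bigr => k _.
  by rewrite mul1r.
move: cF; rewrite hF cKH => e; apply/eqP.
by rewrite -(@eqn_exp2r _ _ 2) // e mulnn.
Qed.

Lemma psi_Tr0 x : Tr x = 0 -> psi x = 1.
Proof. by move=> h; rewrite /psi h -(mulr0n (1 : F)) (xi3_pow_nat chF). Qed.

Lemma psi_pair x : psi (- x) + psi x = 2 \/ psi (- x) + psi x = -1.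
Proof.
have [j [hj ->]] := psi_nat x.
have -> : psi (- x) = xi3 ^+ (2 * j).
  rewrite /psi TrN hj -(xi3_pow_nat chF); congr xi3_pow.
  apply/eqP; rewrite eq_sym -subr_eq0 opprK -natrD.
  by rewrite (_ : (2 * j + j = 3 * j)%N) ?natrM ?(three0 chF) ?mul0r //; lia.
have r := xi3_rel; have r3 := xi3_3.
case: j {hj} => [[|[|[|?]]] ?] //=.
- by left; rewrite !expr0.
- by right; rewrite muln1 expr1; apply: (addIr 1); rewrite r addNr.
- right; rewrite (_ : (2 * 2 = 3 + 1)%N) // exprD r3 mul1r expr1 addrC.
  by apply: (addIr 1); rewrite r addNr.
Qed.

Lemma main_q (a b : F) (hb : b != 0) :
  let W := walsh m (fun x : F => x ^+ (q + 2)) a b in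
  W = - (q%:R) \/ W = 0 \/ W = q%:R \/ W = 2 * q%:R.
Proof.
move=> W.
pose c := (b ^+ q.+1)^-1.
pose a' := a / b.
have c0 : c != 0 by rewrite invr_eq0 expf_neq0.
have cq : c ^+ q = c.
  by rewrite /c exprVn -exprM mulnC exprM exprS expqq mulrC -exprS.
pose r := c ^+ (3 ^ (2 * m).-1).
have hr : r ^+ 3 = c.
  rewrite /r -exprM -expnSr prednK ?expq2 //; lia.
pose e := r - a'.
pose g := - (e + e ^+ q) / c.
pose lam k := e - c * k ^+ 2.
have W1 : W = \sum_u psi (c * u ^+ (q + 2) - a' * u).
  rewrite /W /walsh (reindex_inj (can_inj (divfK hb))) /=.
  apply: eq_bigr => u _; rewrite /psi; congr (xi3_pow (Tr _)).
  rewrite /c /a' expr_div_n addnS exprS addn1.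
  by rewrite [b ^+ q.+2]exprSr; field; rewrite hb expf_neq0.
have W2 : W = \sum_(k | Kq k) psi (- (a' * k)) * \sum_(s | Hq s) psi (s * lam k).
  rewrite W1 decomp; apply: eq_bigr => k hk; rewrite mulr_sumr.
  apply: eq_bigr => s hs; rewrite mulrC -psiD.
  have hs' : s ^+ q = s by apply/eqP.
  have hk' : k ^+ q = - k by apply/eqP.
  have ex : (s + k) ^+ (q + 2) = (s - k) * (s + k) ^+ 2 by rewrite exprD frobqD hs' hk'.
  have -> : (s + k) ^+ (q + 2) * c - a' * (s + k) =
     (s * lam k + - (a' * k)) + (c * s ^+ 3 - r * s) + (c * s ^+ 2 * k) - c * k ^+ 3.
    by rewrite ex /lam /e; ring.
  have t1 : Tr (c * s ^+ 3 - r * s) = 0 by rewrite TrD TrN -hr -exprMn Tr3 subrr.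
  have t2 : Tr (c * s ^+ 2 * k) = 0.
    by apply: Tr_K; rewrite /Kq !frobqM cq hs' hk' mulrN -expr2.
  have t3 : Tr (c * k ^+ 3) = 0.
    apply: Tr_K; rewrite /Kq frobqM cq -exprM mulnC exprM hk'.
    by have := frobN chF k 1; rewrite expn1 => ->; rewrite mulrN.
  rewrite /psi; congr xi3_pow.
  set X1 := s * lam k - a' * k; set Y := c * s ^+ 3 - r * s.
  set Z := c * s ^+ 2 * k; set V := c * k ^+ 3.
  rewrite [X in X = _]TrD TrN [X in X - _ = _]TrD [X in X + _ - _ = _]TrD t1 t2 t3.
  by rewrite oppr0 !addr0 /X1 [s * lam k - _]addrC.
have W3 : W = q%:R * \sum_(k | Kq k && (k ^+ 2 == g)) psi (- (a' * k)).
  rewrite W2 big_mkcondr mulr_sumr; apply: eq_bigr => k hk.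
  have eK : Kq (lam k) = (k ^+ 2 == g).
    rewrite /Kq /lam frobqD frobqN frobqM cq -exprM mulnC exprM (eqP hk) sqrrN.
    rewrite -subr_eq0 [RHS]eq_sym -subr_eq0 [RHS]eq_sym.
    have -> : e ^+ q - c * k ^+ 2 - - (e - c * k ^+ 2) =
       (k ^+ 2 - g) * c + 3%:R * (- (c * k ^+ 2)) by rewrite /g; field.
    by rewrite (three0 chF) mul0r ?addr0 ?subr0 mulf_eq0 (negbTE c0) orbF subr_eq0.
  rewrite -eK; case: (boolP (Kq (lam k))) => h.
    by rewrite orthK // cardH mulrC.
  by rewrite orthN // !mulr0.
rewrite W3.
case: (pickP (fun k => Kq k && (k ^+ 2 == g))) => [k0 /andP [Kk0 hk0] | none]; last first.
  right; left; rewrite big1 ?mulr0 // => k hk.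
  by move: (none k); rewrite hk.
have sq_eq k : k ^+ 2 == g -> (k == k0) || (k == - k0).
  move=> /eqP hk; have : k ^+ 2 - k0 ^+ 2 = 0 by rewrite hk (eqP hk0) subrr.
  by rewrite subr_sqr => /eqP; rewrite mulf_eq0 subr_eq0 addr_eq0.
have [z0 | nz0] := eqVneq k0 0.
  right; right; left.
  rewrite (bigD1 k0) /=; last by rewrite Kk0 hk0.
  rewrite big1 ?addr0.
    by rewrite z0 mulr0 oppr0 psi0 mulr1.
  move=> k /andP [/andP [_ hk] nk]; move: (sq_eq k hk).
  by rewrite z0 oppr0 orbb; move: nk; rewrite z0 => /negbTE ->.
have nk0 : - k0 != k0.
  apply: contra nz0; rewrite eq_sym -addr_eq0 -mulr2n -mulr_natl mulf_eq0.
  by rewrite (negbTE (two_neq0 chF)) orFb.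
rewrite (bigD1 k0) /=; last by rewrite Kk0 hk0.
rewrite (bigD1 (- k0)) /=; last first.
  by rewrite /Kq frobqN (eqP Kk0) eqxx sqrrN hk0 nk0.
rewrite big1 ?addr0; last first.
  move=> k /andP [/andP [/andP [_ hk] n1] n2]; move: (sq_eq k hk).
  by rewrite (negbTE n1) (negbTE n2).
rewrite mulrN opprK.
case: (psi_pair (a' * k0)) => ->.
  by right; right; right; rewrite mulrC.
by left; rewrite mulrN1.
Qed.
End T.

Theorem proposition10 (F : finFieldType) (m : nat) (hm : (1 <= m)%N)
    (hF : #|F| = ((3 ^ m) ^ 2)%N) (a b : F) (hb : b != 0) :
  let q : algC := (3 ^ m)%:R in
  let W := walsh m (fun x : F => x ^+ (3 ^ m + 2)) a b in
  W = - q \/ W = 0 \/ W = q \/ W = 2 * q.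
Proof. exact: (@main_q F m hm hF a b hb). Qed.
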